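(* Let $n,x$ be integers with $1<x<n$, so that $G=C_{2n}(x,1,n)$ is a $5$-regular circulant graph. If $n\equiv x\equiv 1 \pmod 3$, then $G$ is word-representable.
   Context: Two distinct letters $x,y$ alternate in a word $w$ if, after deleting all other letters from $w$, the resulting word is of the form $xyxy\cdots$ or $yxyx\cdots$ (of even or odd length). A graph $G=(V,E)$ is word-representable if there is a word $w$ over the alphabet $V$, containing every letter of $V$ at least once, such that for all distinct $x,y\in V$, $xy\in E$ if and only if $x$ and $y$ alternate in $w$. For an integer $m$ and a set $R$ of positive integers each at most $m/2$, the circulant graph $C_m(R)$ has vertex set $\{0,1,\dots,m-1\}$, with $i$ and $j$ adjacent iff $\min(|i-j|,\,m-|i-j|)\in R$. $C_{2n}(x,1,n)$ denotes the circulant graph on $2n$ vertices with jump set $\{1,x,n\}$; it is $5$-regular exactly when $1<x<n$. *)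

(* Defs.v *)
From mathcomp Require Import ssreflect ssrfun ssrbool eqtype ssrnat seq path div fintype.
Set Implicit Arguments. Unset Strict Implicit. Unset Printing Implicit Defensive.

Definition alternate (V : eqType) (w : seq V) (x y : V) : bool :=
  sorted (fun a b => a != b) [seq z <- w | (z == x) || (z == y)].

Definition word_representable (V : finType) (adj : rel V) : Prop :=
  exists w : seq V, (forall v : V, v \in w) /\
    (forall x y : V, x != y -> (adj x y <-> alternate w x y)).

Definition circ_dist (m i j : nat) : nat :=
  let d := maxn i j - minn i j in minn d (m - d).

Definition circulant (m : nat) (R : pred nat) : rel 'I_m :=
  fun i j => R (circ_dist m i j).

Definition C2n_x1n (n x : nat) : rel 'I_(2 * n) :=
  @circulant (2 * n) (fun d => [|| d == 1, d == x | d == n]).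

(* Main.v *)
Require Import Defs.
From mathcomp Require Import ssreflect ssrfun ssrbool eqtype ssrnat seq path div fintype.
From mathcomp Require Import zify.
Set Implicit Arguments. Unset Strict Implicit. Unset Printing Implicit Defensive.

(* Proof idea: G is 3-colourable (colour i mod 3 on [0,n), (i+1) mod 3 on [n,2n));
   every 3-colourable graph is word-representable via an explicit word. *)

Definition allV (V : finType) : seq V := locked (enum V).
Lemma allV_mem (V : finType) (v : V) : v \in allV V.
Proof. by rewrite /allV -lock mem_enum. Qed.
Lemma allV_uniq (V : finType) : uniq (allV V).
Proof. rewrite /allV -lock; exact: enum_uniq. Qed.
Arguments allV : simpl never.

Definition TT (V : finType) (col : V -> nat) : seq V :=
  [seq v <- allV V | col v == 0] ++ [seq v <- allV V | col v == 1] ++ [seq v <- allV V | col v == 2].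

Lemma TT_uniq (V : finType) (col : V -> nat) : uniq (TT col).
Proof.
rewrite /TT !cat_uniq !filter_uniq ?allV_uniq //.
rewrite has_cat !negb_or /=.
by apply/and3P; split; try apply/andP; try split; apply/hasPn => y;
  rewrite !mem_filter => /andP[/eqP-> _]; rewrite ?mem_filter.
Qed.

Lemma TT_mem (V : finType) (col : V -> nat) v : col v < 3 -> v \in TT col.
Proof.
move=> h; rewrite /TT !mem_cat !mem_filter allV_mem /= !andbT.
by case: (col v) h => [|[|[|]]].
Qed.

Lemma TT_pos (V : finType) (col : V -> nat) a b :
  col a < col b -> col b < 3 -> index a (TT col) < index b (TT col).
Proof.
move=> hab hb; rewrite /TT !index_cat !mem_filter !allV_mem /= !andbT.
set L0 := [seq v <- allV V | col v == 0].
set L1 := [seq v <- allV V | col v == 1].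
have i0 : forall c, col c == 0 -> index c L0 < size L0.
  by move=> c h; rewrite index_mem /L0 mem_filter allV_mem h.
have i1 : forall c, col c == 1 -> index c L1 < size L1.
  by move=> c h; rewrite index_mem /L1 mem_filter allV_mem h.
move: (i0 a) (i1 a).
case Ea: (col a) hab => [|[|[|ca]]] hab; case Eb: (col b) hb hab => [|[|[|cb]]] hb hab //= ha0 ha1.
- have := ha0 erefl; lia.
- have := ha0 erefl; lia.
- have := ha1 erefl; lia.
Qed.

Definition pos (V : finType) (col : V -> nat) (v : V) := index v (TT col).
Definition rc (V : finType) (col : V -> nat) (z v : V) :=
  if col z <= col v then col v - col z else col v + 3 - col z.
Definition key (V : finType) (adj : rel V) (col : V -> nat) (z v : V) : nat :=
  let r := rc col z v in
  if r == 0 then (if pos col z < pos col v then 0 else 7)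
  else if r == 1 then (if adj z v then 3 else 1) else (if adj z v then 4 else 6).
Definition blk (V : finType) (adj : rel V) (col : V -> nat) (z : V) (k : nat) : seq V :=
  if (k == 2) || (k == 5) then [:: z] else [seq y <- TT col | (y != z) && (key adj col z y == k)].
Definition seg (V : finType) (adj : rel V) (col : V -> nat) (z : V) : seq V :=
  flatten [seq blk adj col z k | k <- iota 0 8].
Definition word (V : finType) (adj : rel V) (col : V -> nat) : seq V :=
  TT col ++ flatten [seq seg adj col z | z <- TT col].

Lemma key_range (V : finType) (adj : rel V) (col : V -> nat) z y :
  key adj col z y \in [:: 0; 1; 3; 4; 6; 7].
Proof. by rewrite /key; repeat case: ifP. Qed.

Lemma filter_seg (V : finType) (adj : rel V) (col : V -> nat) (P : pred V) z :
  filter P (seg adj col z) = flatten [seq (if (k == 2) || (k == 5) then filter P [:: z]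
     else [seq y <- TT col | P y && ((y != z) && (key adj col z y == k))]) | k <- iota 0 8].
Proof.
rewrite /seg filter_flatten -map_comp; congr flatten; apply: eq_map => k /=.
rewrite /blk; case: ifP => // _; by rewrite -filter_predI.
Qed.

Lemma seg_other (V : finType) (adj : rel V) (col : V -> nat) (u v z : V) :
  z != u -> z != v ->
  filter (fun y => (y == u) || (y == v)) (TT col) = [:: u; v] ->
  key adj col z u != key adj col z v ->
  filter (fun y => (y == u) || (y == v)) (seg adj col z) =
    if key adj col z u < key adj col z v then [:: u; v] else [:: v; u].
Proof.
move=> zu zv hT hk; rewrite filter_seg.
transitivity (flatten [seq (if (k==2)||(k==5) then [::] else
   [seq y <- [:: u; v] | (y != z) && (key adj col z y == k)]) | k <- iota 0 8]).
  congr flatten; apply: eq_map => k; case: ifP => _.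
    by rewrite /= (negbTE zu) (negbTE zv).
  by rewrite -hT -filter_predI; apply: eq_filter => y; rewrite /= andbC.
rewrite /= !(eq_sym u z) !(eq_sym v z) zu zv /=.
move: hk (key_range adj col z u) (key_range adj col z v).
case: (key adj col z u) => [|[|[|[|[|[|[|[|]]]]]]]] //;
case: (key adj col z v) => [|[|[|[|[|[|[|[|]]]]]]]] //.
Qed.

Lemma seg_self (V : finType) (adj : rel V) (col : V -> nat) (P : pred V) (u v : V) :
  u != v -> v \in TT col -> P =1 (fun y => (y == u) || (y == v)) ->
  filter P (seg adj col u) =
    if key adj col u v < 2 then [:: v; u; u] else if key adj col u v < 5 then [:: u; v; u]
    else [:: u; u; v].
Proof.
move=> uv vT hP; rewrite filter_seg.
transitivity (flatten [seq (if (k==2)||(k==5) then [:: u] else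
   [seq y <- [:: v] | key adj col u y == k]) | k <- iota 0 8]).
  congr flatten; apply: eq_map => k; case: ifP => _.
    by rewrite /= hP eqxx.
  rewrite -(filter_pred1_uniq (TT_uniq col) vT) -filter_predI.
  apply: eq_filter => y /=; rewrite hP.
  by case: (eqVneq y u) => [->|_]; rewrite ?eqxx ?(negbTE uv) ?andbF //= andbC.
rewrite /=.
move: (key_range adj col u v).
case: (key adj col u v) => [|[|[|[|[|[|[|[|]]]]]]]] //.
Qed.

Lemma pos_inj (V : finType) (col : V -> nat) a b :
  a \in TT col -> b \in TT col -> pos col a = pos col b -> a = b.
Proof.
move=> ha hb e; by rewrite -(nth_index a ha) -(nth_index a hb) -/(pos col a) -/(pos col b) e.
Qed.

Lemma key_order (V : finType) (adj : rel V) (col : V -> nat) (u v z : V) :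
  (forall a, col a < 3) -> col u < col v -> z != u -> z != v ->
  (key adj col z u < key adj col z v) = ~~ ((pos col u < pos col z) && (pos col z < pos col v)).
Proof.
move=> c3 cuv zu zv.
have P1 : forall a b, col a < col b -> pos col a < pos col b.
  by move=> a b h; apply: TT_pos => //.
have D : forall a b, a != b -> pos col a != pos col b.
  move=> a b ab; apply/eqP => e; move/eqP: ab; apply; apply: pos_inj e; exact: TT_mem.
have h1 := P1 u v cuv. have h2 := P1 z u. have h3 := P1 u z. have h4 := P1 z v.
have h5 := P1 v z. have h6 := D _ _ zu. have h7 := D _ _ zv.
have c1 := c3 u. have c2 := c3 v. have c0 := c3 z.
rewrite /key /rc.
move: h1 h2 h3 h4 h5 h6 h7 c0 c1 c2 cuv.
move: (pos col u) (pos col v) (pos col z) (col u) (col v) (col z) (adj z u) (adj z v) => pu pv pz cu cv cz a1 a2.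
move=> h1 h2 h3 h4 h5 h6 h7 c0 c1 c2 cuv.
repeat case: ifP; try case: a1; try case: a2; lia.
Qed.

Lemma key_adj (V : finType) (adj : rel V) (col : V -> nat) (z y : V) :
  adj z y -> col z != col y -> col z < 3 -> col y < 3 ->
  (2 <= key adj col z y) && (key adj col z y < 5).
Proof.
move=> a; rewrite /key /rc a; move: (col z) (col y) => cz cy.
repeat case: ifP; lia.
Qed.

Lemma key_nonadj (V : finType) (adj : rel V) (col : V -> nat) (z y : V) :
  ~~ adj z y -> (key adj col z y < 2) || (5 <= key adj col z y).
Proof.
move=> a; rewrite /key (negbTE a); repeat case: ifP => //.
Qed.

Lemma filter2 (A : eqType) (s : seq A) (u v : A) :
  uniq s -> u \in s -> v \in s -> index u s < index v s ->
  filter (fun y => (y == u) || (y == v)) s = [:: u; v].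
Proof.
elim: s => // a s IH /= /andP[nas us].
rewrite !inE; case: (eqVneq a u) => [<-|au].
  move=> _ hv; case: (eqVneq a v) => // av _ /=.
  have hv' : v \in s by move: hv; rewrite eq_sym (negbTE av).
  rewrite -(filter_pred1_uniq us hv'); congr (_ :: _); apply: eq_in_filter => y ys /=.
  by case: (eqVneq y a) => [ya|//]; rewrite -ya ys in nas.
case: (eqVneq a v) => [<-|av] //= hu hv; rewrite ltnS => h.
by apply: IH => //; move: hv; rewrite eq_sym (negbTE av).
Qed.

Lemma chain (A : eqType) (g : nat -> seq A) (st : nat -> A) m k :
  (forall i, m <= i < m + k -> path (fun a b => a != b) (st i) (g i) && (last (st i) (g i) == st i.+1)) ->
  path (fun a b => a != b) (st m) (flatten [seq g i | i <- iota m k]).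
Proof.
elim: k m => // k IH m h /=; rewrite cat_path.
have /andP[p1 /eqP l1] := h m ltac:(lia).
rewrite p1 l1 /=; apply: IH => i hi; apply: h; lia.
Qed.

Definition kc (k : nat) := if k \in [:: 0; 7] then 0 else if k \in [:: 1; 3] then 1 else 2.

Lemma kc_key (V : finType) (adj : rel V) (col : V -> nat) (z y : V) :
  col z < 3 -> col y < 3 -> kc (key adj col z y) = rc col z y.
Proof.
move=> hz hy; rewrite /key.
have : rc col z y < 3 by rewrite /rc; case: ifP; lia.
case: (rc col z y) => [|[|[|r]]] //= _; by repeat case: ifP.
Qed.

Lemma key_neq (V : finType) (adj : rel V) (col : V -> nat) (z u v : V) :
  col z < 3 -> col u < 3 -> col v < 3 -> col u != col v ->
  key adj col z u != key adj col z v.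
Proof.
move=> hz hu hv huv; apply/eqP => e.
have := kc_key adj hz hu; have := kc_key adj hz hv; rewrite e => -> .
rewrite /rc; move: hz hu hv huv; move: (col z) (col u) (col v) => a b c.
repeat case: ifP; lia.
Qed.

Lemma alt_edge (V : finType) (adj : rel V) (col : V -> nat) (u v : V) :
  (forall a b, adj a b = adj b a) -> (forall a, col a < 3) -> adj u v -> col u < col v ->
  alternate (word adj col) u v.
Proof.
move=> sym c3 auv cuv.
have uv : u != v by apply/eqP => e; rewrite e ltnn in cuv.
have uT := TT_mem (c3 u); have vT := TT_mem (c3 v).
have puv : pos col u < pos col v := TT_pos cuv (c3 v).
have hT := filter2 (TT_uniq col) uT vT puv.
rewrite /alternate /word filter_cat hT filter_flatten -map_comp.
set N := size (TT col).
rewrite -(mkseq_nth u (TT col)) /mkseq -map_comp -/N /= uv /=.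
pose st i := if (i <= pos col u) || (pos col v < i) then v else u.
apply: (@chain _ _ st 0 N) => i /andP[_ hi] /=.
have hiN : i < size (TT col) by [].
have pz : pos col (nth u (TT col) i) = i by rewrite /pos index_uniq // TT_uniq.
have zT : nth u (TT col) i \in TT col by rewrite mem_nth.
set z := nth u (TT col) i in pz zT *.
case: (eqVneq z u) => [zu|zu].
  rewrite zu (@seg_self _ _ _ _ u v) //; have /andP[k1 k2] := key_adj auv (negbT (ltn_eqF cuv)) (c3 u) (c3 v).
  rewrite ltnNge k1 k2 /= -pz zu /st; rewrite leqnn /=.
  have -> : (pos col u).+1 <= pos col u = false by lia.
  have -> : pos col v < (pos col u).+1 = false by lia.
  by rewrite /= (eq_sym v u) uv eqxx.
case: (eqVneq z v) => [zv|zv].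
  rewrite zv (@seg_self _ _ _ _ v u) 1?eq_sym //; last by move=> y; rewrite orbC.
  have cvu : col v != col u by rewrite eq_sym (negbT (ltn_eqF cuv)).
  have /andP[k1 k2] := key_adj (y:=u) (z:=v) (adj := adj) ltac:(by rewrite sym) cvu (c3 v) (c3 u).
  rewrite ltnNge k1 k2 /= -pz zv /st.
  have -> : pos col v <= pos col u = false by lia.
  have -> : pos col v < pos col v = false by rewrite ltnn.
  have -> : (pos col v).+1 <= pos col u = false by lia.
  have -> : pos col v < (pos col v).+1 by [].
  by rewrite /= (eq_sym v u) uv eqxx.
have kne := key_neq adj (c3 z) (c3 u) (c3 v) (negbT (ltn_eqF cuv)).
have iu : i != pos col u by rewrite -pz; apply/eqP => e; move/eqP: zu; apply; apply: pos_inj e.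
have iv : i != pos col v by rewrite -pz; apply/eqP => e; move/eqP: zv; apply; apply: pos_inj e.
rewrite seg_other // key_order // pz /st.
case: (boolP ((pos col u < i) && (i < pos col v))) => H /=.
  have -> : (i <= pos col u) || (pos col v < i) = false by lia.
  have -> : (i.+1 <= pos col u) || (pos col v < i.+1) = false by lia.
  by rewrite /= (eq_sym v u) uv eqxx.
have -> : (i <= pos col u) || (pos col v < i) = true by lia.
have -> : (i.+1 <= pos col u) || (pos col v < i.+1) = true by lia.
by rewrite /= (eq_sym v u) uv eqxx.
Qed.

Lemma alt_nonedge (V : finType) (adj : rel V) (col : V -> nat) (u v : V) :
  (forall a, col a < 3) -> u != v -> ~~ adj u v ->
  ~~ alternate (word adj col) u v.
Proof.
move=> c3 uv nuv.
have vT := TT_mem (c3 v).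
have hs := @seg_self _ adj col (fun y => (y == u) || (y == v)) u v uv vT (frefl _).
rewrite /alternate /word filter_cat filter_flatten -map_comp.
case/splitPr: (TT_mem (c3 u)) => T1 T2.
rewrite map_cat flatten_cat /=.
apply/negP => /cat_sorted2 [_ /cat_sorted2 [_ /cat_sorted2 [H _]]].
move: H; rewrite hs.
have := key_nonadj col nuv.
by case: ifP => h1 /=; [rewrite eqxx andbF | case: ifP => h2 /=; [lia | rewrite eqxx]].
Qed.

Lemma alternateC (V : eqType) (w : seq V) x y : alternate w x y = alternate w y x.
Proof. by rewrite /alternate (eq_filter (a2 := fun z => (z == y) || (z == x))) // => z; rewrite orbC. Qed.

Lemma three_col_wr (V : finType) (adj : rel V) (col : V -> nat) :
  (forall a b, adj a b = adj b a) -> (forall a, col a < 3) ->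
  (forall a b, adj a b -> col a != col b) -> word_representable adj.
Proof.
move=> sym c3 hc; exists (word adj col); split.
  by move=> v; rewrite /word mem_cat TT_mem.
move=> x y xy; split.
  move=> a; have := hc _ _ a; case: (ltngtP (col x) (col y)) => // h _.
    exact: alt_edge.
  rewrite alternateC; apply: alt_edge => //; by rewrite sym.
move=> h; apply/negPn/negP => na; move: h; apply/negP; exact: alt_nonedge.
Qed.

Theorem corollary1 (n x : nat) :
  1 < x -> x < n -> n %% 3 = 1 -> x %% 3 = 1 ->
  word_representable (@C2n_x1n n x).
Proof.
move=> x1 xn n3 x3.
apply: (@three_col_wr _ _ (fun i : 'I_(2 * n) => if i < n then i %% 3 else i.+1 %% 3)).
- by move=> a b; rewrite /C2n_x1n /circulant /circ_dist (maxnC a b) (minnC a b).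
- by move=> a; case: ifP => _; rewrite ltn_pmod.
- move=> [a ha] [b hb]; rewrite /C2n_x1n /circulant /circ_dist /=.
  move=> H; apply/negP => /eqP E; move: H E.
  case: ifP => h1; case: ifP => h2; lia.
Qed.
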